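(* Let $z\in\mathbb{R}_{\ge0}^s$ with $\sum_j z_j>0$ and $\eta>0$, let $S=\{j: z_j>0\}$, and for $j\in S$ let $g_j=\frac{1}{(\sum_l z_l)^2}\sum_k z_k\log\frac{z_k}{z_j}$. Let $\tilde z_j=\max(z_j-\eta g_j,0)$ for $j\in S$ and $\tilde z_j=0$ for $j\notin S$. Suppose that a smallest non-zero entry $z_{i_0}$ of $z$ satisfies $\tilde z_{i_0}>0$. Then for every $i\in S$, $$\frac{\tilde z_i}{\sum_j\tilde z_j}-\frac{z_i}{\sum_j z_j}=\frac{z_i-\eta g_i}{\sum_{j\in S}(z_j-\eta g_j)}-\frac{z_i}{\sum_j z_j}=\frac{\eta}{c}\Big[z_i\sum_{j\in S}g_j-\Big(\sum_j z_j\Big)g_i\Big],$$ where $c=\big(\sum_j z_j\big)\big(\sum_{j\in S}(z_j-\eta g_j)\big)>0$ does not depend on $i$.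
   Context: $g_j$ is the partial derivative with respect to $z_j$ of the entropy $\mathcal{H}(z)=-\sum_i \frac{z_i}{\sum_l z_l}\log\frac{z_i}{\sum_l z_l}$ (convention $0\log0=0$, so terms with $z_k=0$ contribute $0$). *)

(* Defs.v *)
From mathcomp Require Import all_boot all_order all_algebra.
From mathcomp Require Import all_classical all_reals all_analysis.
Set Implicit Arguments. Unset Strict Implicit. Unset Printing Implicit Defensive.
Import Order.TTheory GRing.Theory Num.Theory.
Local Open Scope ring_scope.

(* g_j = (1/(sum_l z_l)^2) * sum_k z_k log(z_k/z_j); terms with z_k = 0 vanish
   (0 * _ = 0), matching the convention 0 log 0 = 0. Used only for j in S. *)
Definition ent_grad (R : realType) (s : nat) (z : 'I_s -> R) (j : 'I_s) : R :=
  (\sum_(l < s) z l) ^- 2 * \sum_(k < s) z k * ln (z k / z j).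

Definition ztilde (R : realType) (s : nat) (eta : R) (z : 'I_s -> R) (j : 'I_s) : R :=
  if 0 < z j then Num.max (z j - eta * ent_grad z j) 0 else 0.

(* Main.v *)
Require Import Defs.
From mathcomp Require Import all_boot all_order all_algebra.
From mathcomp Require Import all_classical all_reals all_analysis.
From mathcomp Require Import ring.
Import Order.TTheory GRing.Theory Num.Theory.
Local Open Scope ring_scope.

Lemma grad_form (R : realType) (s : nat) (z : 'I_s -> R)
  (hz : forall j, 0 <= z j) (j : 'I_s) : 0 < z j ->
  ent_grad z j = (\sum_(l < s) z l) ^- 2 *
     ((\sum_(k < s) z k * ln (z k)) - (\sum_(k < s) z k) * ln (z j)).
Proof.
move=> hj; rewrite /ent_grad; congr (_ * _).
rewrite mulr_suml -sumrB; apply: eq_bigr => k _.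
have := hz k; rewrite le_eqVlt => /orP[/eqP <-|hk]; first by rewrite !mul0r subr0.
by rewrite ln_div ?posrE // mulrBr.
Qed.

Theorem corollary9 (R : realType) (s : nat) (z : 'I_s -> R) (eta : R)
  (hz : forall j, 0 <= z j) (hsum : 0 < \sum_(j < s) z j) (heta : 0 < eta)
  (hmin : exists i0 : 'I_s, [/\ 0 < z i0,
            (forall j, 0 < z j -> z i0 <= z j) & 0 < ztilde eta z i0]) :
  let Z := \sum_(j < s) z j in
  let D := \sum_(j < s | 0 < z j) (z j - eta * ent_grad z j) in
  let c := Z * D in
  0 < c /\
  forall i : 'I_s, 0 < z i ->
    ztilde eta z i / (\sum_(j < s) ztilde eta z j) - z i / Z
      = (z i - eta * ent_grad z i) / D - z i / Z /\
    (z i - eta * ent_grad z i) / D - z i / Z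
      = eta / c * (z i * (\sum_(j < s | 0 < z j) ent_grad z j) - Z * ent_grad z i).
Proof.
move=> Z D c.
case: hmin => i0 [hi0 hmn ht0].
have hx0 : 0 < z i0 - eta * ent_grad z i0.
  move: ht0; rewrite /ztilde hi0.
  by case: (lerP (z i0 - eta * ent_grad z i0) 0) => h; rewrite ?max_r ?max_l ?ltxx // ltW.
have hxpos : forall j, 0 < z j -> 0 < z j - eta * ent_grad z j.
  move=> j hj; apply: (lt_le_trans hx0).
  rewrite !grad_form //.
  set A := \sum_(k < s) z k * ln (z k).
  have hl : ln (z i0) <= ln (z j) by rewrite ler_ln ?posrE // hmn.
  have hZ : 0 <= Z ^- 2 by rewrite invr_ge0 exprn_ge0 // ltW.
  rewrite -/Z lerD ?hmn // lerN2 ler_wpM2l ?(ltW heta) // ler_wpM2l //.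
  by rewrite lerB // ler_wpM2l // ltW.
have hzt : forall j, ztilde eta z j = if 0 < z j then z j - eta * ent_grad z j else 0.
  move=> j; rewrite /ztilde; case: ifP => // hj.
  by rewrite max_l // ltW // hxpos.
have hsumt : \sum_(j < s) ztilde eta z j = D.
  rewrite /D [RHS]big_mkcond /=; apply: eq_bigr => j _; exact: hzt.
have hD : 0 < D.
  rewrite /D (bigD1 i0) //=; apply: ltr_pwDl; first exact: hx0.
  apply: sumr_ge0 => j /andP[hj _]; exact: ltW (hxpos j hj).
have hZS : \sum_(j < s | 0 < z j) z j = Z.
  rewrite /Z big_mkcond /=; apply: eq_bigr => j _.
  by case: ifP => // /negbT; rewrite -leNgt => h; apply/eqP; rewrite eq_le h hz.
split; first by rewrite /c mulr_gt0.
move=> i hi; split; first by rewrite hsumt hzt hi.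
have hD0 : D != 0 by rewrite gt_eqF.
have hZ0 : Z != 0 by rewrite gt_eqF.
rewrite /c.
have -> : D = Z - eta * \sum_(j < s | 0 < z j) ent_grad z j.
  by rewrite /D sumrB hZS mulr_sumr.
have hD' : Z - eta * \sum_(j < s | 0 < z j) ent_grad z j != 0.
  move: hD0; rewrite /D sumrB hZS mulr_sumr //.
move: hD' hZ0; clear.
move: (\sum_(j < s | 0 < z j) ent_grad z j) (ent_grad z i) (z i) Z => G g x Z0 h1 h2.
by field; apply/andP.
Qed.
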